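(* Let $k\ge1$. The code $C=\Phi_R(\mathcal{S}_k^{\alpha})$ over $\mathbb{F}_q$ has length $q^{s(k+1)-1}$, has $q^{sk}$ codewords, and has minimum Hamming distance $q^{s(k+1)-2}(q-1)$. Moreover its Hamming weight enumerator is $W_C(X,Y)=A_\ell X^{n'-\ell}Y^\ell+X^{n'}$, where $n'=q^{s(k+1)-1}$, $A_\ell=q^{sk}-1$ and $\ell=q^{s(k+1)-2}(q-1)$.
   Context: Let $R$ be a finite commutative chain ring: a finite commutative ring with $1\neq0$ whose ideals form a single chain under inclusion. Its unique maximal ideal is principal, generated by some $\gamma$; let $s\ge1$ be the least integer with $\gamma^s=0$. The residue field $R/\langle\gamma\rangle$ is isomorphic to $\mathbb{F}_q$, $q$ a prime power, and $\bar r$ denotes the image of $r\in R$ in it. Fix a set $T=\{e_0,\dots,e_{q-1}\}\subseteq R$ of coset representatives of $R/\langle\gamma\rangle$ with $e_0=0$, $e_1=1$, ordered $e_0<\dots<e_{q-1}$. Every $r\in R$ has a unique $\gamma$-adic representation $r=\sum_{i=0}^{s-1}r_i\gamma^i$ with $r_i\in T$. Order $R$ by: $x>y$ iff $x_i>y_i$ in $T$ for the largest $i$ with $x_i\neq y_i$. List $R=\{\rho_0,\dots,\rho_{q^s-1}\}$ increasingly. For $a\in R$, $\mathbf{a}^{(m)}$ is the constant vector of length $m$. Define $G_1^\alpha=(\rho_0\ \rho_1\ \cdots\ \rho_{q^s-1})$ and, for $k>1$, $G_k^\alpha$ as the $k\times q^{sk}$ matrix of $q^s$ column blocks, the $j$-th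 block having first row $\boldsymbol{\rho_j}^{(q^{s(k-1)})}$ and a copy of $G_{k-1}^\alpha$ below it. $\mathcal{S}_k^\alpha$ is the $R$-submodule of $R^{q^{sk}}$ generated by the rows of $G_k^\alpha$. Gray map: let $M$ be the $s\times q^{s-1}$ matrix over $\mathbb{F}_q$ (a generator matrix of the first order $q$-ary Reed–Muller code of length $q^{s-1}$) whose columns are exactly the vectors $(v,1)^T$, $v\in\mathbb{F}_q^{s-1}$; define $\Phi_R:R\to\mathbb{F}_q^{q^{s-1}}$ by $\Phi_R(r)=(\bar r_0,\dots,\bar r_{s-1})M$ and extend it coordinatewise to $R^n\to\mathbb{F}_q^{nq^{s-1}}$. The Hamming weight enumerator of a code $C$ of length $n$ is $\sum_iA_iX^{n-i}Y^i$ with $A_i$ the number of codewords of Hamming weight $i$. *)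

(* Defs.v *)
From mathcomp Require Import all_boot all_order all_algebra.
Set Implicit Arguments. Unset Strict Implicit. Unset Printing Implicit Defensive.
Import GRing.Theory.
Local Open Scope ring_scope.

Section ChainRingCodes.
Variables (R : finComNzRingType) (F : finFieldType).
Local Notation q := #|F|.

Definition is_ideal (I : {set R}) : Prop :=
  [/\ 0 \in I, (forall x y, x \in I -> y \in I -> x + y \in I)
    & (forall r x, x \in I -> r * x \in I)].

Definition is_maximal_ideal (I : {set R}) : Prop :=
  [/\ is_ideal I, I != [set: R]
    & forall J, is_ideal J -> I \subset J -> J = I \/ J = [set: R]].

Definition principal_ideal (g : R) : {set R} := [set g * r | r : R].

Definition is_chain_ring : Prop :=
  forall I J : {set R}, is_ideal I -> is_ideal J -> I \subset J \/ J \subset I.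

Variables (gamma : R) (s : nat) (e : nat -> R).
(* e i = e_i, the i-th element of the set T of coset representatives,
   the order on T being e_0 < e_1 < ... < e_{q-1}. *)

Definition gadic_expansion (r : R) (d : {ffun 'I_s -> 'I_q}) : bool :=
  r == \sum_(i < s) e (d i) * gamma ^+ i.

(* index in T of the i-th gamma-adic digit r_i of r (r_i = e_(digit r i)) *)
Definition digit (r : R) (i : 'I_s) : nat :=
  if [pick d | gadic_expansion r d] is Some d then val (d i) else 0%N.

Definition chain_lt (y x : R) : bool :=
  [exists i : 'I_s, (digit y i < digit x i)%N &&
     [forall j : 'I_s, (i < j)%N ==> (digit y j == digit x j)]].

Definition rho (j : nat) : R :=
  odflt 0 [pick r : R | #|[set y | chain_lt y r]| == j].

(* entry (i, c) of G_k^alpha (0-indexed rows and columns), following the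
   recursive block definition: G_1 = (rho_0 ... rho_{q^s-1}); the j-th column
   block of G_{k} (blocks of width (q^s)^(k-1)) has first row rho_j and a copy
   of G_{k-1} below it. *)
Fixpoint Gent (k i c : nat) : R :=
  match k with
  | 0 => 0
  | k'.+1 => match i with
             | 0 => rho (c %/ (q ^ s) ^ k')
             | i'.+1 => Gent k' i' (c %% (q ^ s) ^ k')
             end
  end.

Definition Gmx (k : nat) : 'M[R]_(k, (q ^ s) ^ k) := \matrix_(i, c) Gent k i c.

Definition Scode (k : nat) : {set 'rV[R]_((q ^ s) ^ k)} :=
  [set a *m Gmx k | a : 'rV[R]_k].

Variables (pi : R -> F) (M : 'M[F]_(s, q ^ s.-1)).
Definition gray (r : R) : 'rV[F]_(q ^ s.-1) :=
  (\row_(i < s) pi (e (digit r i))) *m M.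

(* coordinatewise extension (concatenation of the images) *)
Definition gray_vec (n : nat) (c : 'rV[R]_n) : 'rV[F]_(n * q ^ s.-1) :=
  mxvec (\matrix_(t < n) gray (c 0 t)).

Definition gray_code (k : nat) : {set 'rV[F]_((q ^ s) ^ k * q ^ s.-1)} :=
  [set gray_vec c | c in Scode k].

End ChainRingCodes.

Section Hamming.
Variable (F : finFieldType).

Definition wH (n : nat) (v : 'rV[F]_n) : nat := #|[set j | v 0 j != 0]|.
Definition dH (n : nat) (u v : 'rV[F]_n) : nat := wH (u - v).

(* Hamming weight enumerator sum_i A_i X^(n-i) Y^i in Z[X][Y]:
   X is the inner variable ('X)%:P, Y the outer variable 'X *)
Definition varX : {poly {poly int}} := ('X)%:P.
Definition varY : {poly {poly int}} := 'X.
Definition weight_enum (n : nat) (C : {set 'rV[F]_n}) : {poly {poly int}} :=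
  \sum_(i < n.+1) (#|[set c in C | wH c == i]|)%:R * varX ^+ (n - i) * varY ^+ i.
End Hamming.

(* Main.v *)
Require Import Defs.
From mathcomp Require Import all_boot all_order all_algebra.
From mathcomp Require Import zify ring.
Set Implicit Arguments. Unset Strict Implicit. Unset Printing Implicit Defensive.
Import GRing.Theory.
Local Open Scope ring_scope.

Section Proofs.
Variables (R : finComNzRingType) (F : finFieldType) (pi : {rmorphism R -> F})
  (gamma : R) (s : nat) (e : nat -> R) (M : 'M[F]_(s, #|F| ^ s.-1)).
Hypotheses (Hs1 : (1 <= s)%N) (Hs : gamma ^+ s = 0)
  (Hsmin : forall t, (1 <= t < s)%N -> gamma ^+ t != 0)
  (Hpi_surj : forall x : F, exists r : R, pi r = x)
  (Hpi_ker : forall r : R, pi r = 0 <-> r \in principal_ideal gamma)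
  (He0 : e 0%N = 0)
  (HeT : forall i j, (i < #|F|)%N -> (j < #|F|)%N -> pi (e i) = pi (e j) -> i = j)
  (HMlast : forall (i : 'I_s) j, val i = s.-1 -> M i j = 1)
  (HMcols : forall j j', (forall i : 'I_s, (val i < s.-1)%N -> M i j = M i j') -> j = j').

Local Notation q := #|F|.

Lemma q_gt1 : (1 < q)%N. Proof. exact: card_finNzRing_gt1. Qed.
Lemma q_gt0 : (0 < q)%N. Proof. by apply: ltn_trans q_gt1. Qed.

Lemma pi_gamma : pi gamma = 0.
Proof. by apply/Hpi_ker; apply/imsetP; exists 1; rewrite ?inE // mulr1. Qed.

Lemma pi0_gamma x : pi x = 0 -> exists z, x = gamma * z.
Proof. by move/Hpi_ker/imsetP => [z _ ->]; exists z. Qed.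

Lemma Esurj (f : F) : exists j : 'I_q, pi (e j) = f.
Proof.
have inj : injective (fun j : 'I_q => pi (e j)).
  by move=> i j /HeT H; apply: val_inj; apply: H.
have := inj_card_onto inj (f := fun j : 'I_q => pi (e j)).
rewrite card_ord leqnn => /(_ isT f) /codomP [j ->]; by exists j.
Qed.

Lemma invP x : pi x != 0 -> exists y, x * y = 1.
Proof.
move=> nz.
have [y0 Hy0] := Hpi_surj (pi x)^-1.
have : pi (x * y0 - 1) = 0 by rewrite rmorphB rmorphM rmorph1 Hy0 mulfV ?subrr.
move/pi0_gamma => [z Hz].
set w := gamma * z.
have ws : w ^+ s = 0 by rewrite /w exprMn Hs mul0r.
exists (y0 * \sum_(i < s) (- w) ^+ i).
have H := subrX1 (- w) s.
rewrite exprNn ws mulr0 sub0r in H.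
rewrite mulrA.
have -> : x * y0 = 1 + w by rewrite /w -Hz; ring.
apply: oppr_inj; rewrite H; ring.
Qed.

Lemma key j x : (j < s)%N -> gamma ^+ j * x = 0 -> pi x = 0.
Proof.
move=> js H; apply/eqP; apply/negPn/negP => /invP [y Hy].
have : gamma ^+ j = 0 by rewrite -[gamma ^+ j]mulr1 -Hy mulrA H mul0r.
case: j js {H} => [|j] js.
  by rewrite expr0 => /eqP; rewrite oner_eq0.
by move/eqP; apply/negP; apply: Hsmin.
Qed.


Definition expand (d : {ffun 'I_s -> 'I_q}) : R := \sum_(i < s) e (d i) * gamma ^+ i.

Lemma ex_aux m : (m <= s)%N -> forall r, exists (d : nat -> 'I_q) (z : R),
  r = \sum_(i < m) e (d i) * gamma ^+ i + gamma ^+ m * z.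
Proof.
elim: m => [|m IH] Hm r.
  by exists (fun _ => Ordinal q_gt0), r; rewrite big_ord0 expr0 mul1r add0r.
have [d [z Hr]] := IH (ltnW Hm) r.
have [j Hj] := Esurj (pi z).
have : pi (z - e j) = 0 by rewrite rmorphB Hj subrr.
move/pi0_gamma => [z' Hz'].
exists (fun i => if i == m then j else d i), z'.
rewrite big_ord_recr /= eqxx Hr.
have -> : \sum_(i < m) e (if (i : nat) == m then j else d i) * gamma ^+ i
        = \sum_(i < m) e (d i) * gamma ^+ i.
  by apply: eq_bigr => i _; rewrite ltn_eqF.
have -> : z = e j + gamma * z' by rewrite -Hz'; ring.
rewrite exprSr; ring.
Qed.

Lemma expand_ex r : exists d, r = expand d.
Proof.
have [d [z Hr]] := ex_aux (leqnn s) r.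
exists [ffun i : 'I_s => d i]; rewrite /expand Hr Hs mul0r addr0.
by apply: eq_bigr => i _; rewrite ffunE.
Qed.

Lemma expand_inj : injective expand.
Proof.
move=> d d' H.
have Hc : \sum_(i < s) (e (d i) - e (d' i)) * gamma ^+ i = 0.
  have -> : \sum_(i < s) (e (d i) - e (d' i)) * gamma ^+ i = expand d - expand d'.
    by rewrite /expand -sumrB; apply: eq_bigr => i _; rewrite mulrBl.
  by rewrite H subrr.
apply/ffunP => i.
suff : forall n (i : 'I_s), (i < n)%N -> d i = d' i by move/(_ _ i (ltnSn i)).
elim=> [//|n IH] i0; rewrite ltnS => Hi0; clear i.
set c := fun i : 'I_s => e (d i) - e (d' i).
have Hc0 : forall i' : 'I_s, (i' < i0)%N -> c i' = 0.
  by move=> i' Hi'; rewrite /c IH ?subrr //; apply: leq_trans Hi' Hi0.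
have Hfac : \sum_(i < s) c i * gamma ^+ i
          = gamma ^+ i0 * \sum_(i < s) c i * gamma ^+ (i - i0).
  rewrite mulr_sumr; apply: eq_bigr => i _.
  case: (ltnP i i0) => Hl; first by rewrite Hc0 // !mul0r mulr0.
  by rewrite mulrCA -exprD subnKC.
have := key (ltn_ord i0) (etrans (esym Hfac) Hc).
rewrite rmorph_sum (bigD1 i0) //= subnn expr0 mulr1 big1 ?addr0.
  rewrite /c rmorphB => /eqP; rewrite subr_eq0 => /eqP /HeT H0.
  by apply: val_inj; apply: H0.
move=> i Hi; rewrite rmorphM rmorphXn pi_gamma expr0n.
case: (ltnP i i0) => Hl; first by rewrite Hc0 // rmorph0 mul0r.
have -> : (i - i0 == 0)%N = false.
  apply/negbTE; rewrite subn_eq0 -ltnNge ltn_neqAle Hl andbT eq_sym.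
  by move: Hi; apply: contra => /eqP Hii; apply/eqP; apply: val_inj.
by rewrite mulr0.
Qed.

Lemma digit_expand r d : r = expand d -> forall i, digit F gamma e r i = d i.
Proof.
move=> Hr i; rewrite /digit; case: pickP => [d' /eqP Hd' | H].
  by rewrite (@expand_inj d d') // -Hr.
by have := H d; rewrite /gadic_expansion Hr eqxx.
Qed.

Local Notation dg r i := (@digit R F gamma s e r i).

Lemma digit_lt r i : (dg r i < q)%N.
Proof. by have [d Hd] := expand_ex r; rewrite (digit_expand Hd). Qed.

Definition dig r : {ffun 'I_s -> 'I_q} := [ffun i => Ordinal (digit_lt r i)].

Lemma digK r : expand (dig r) = r.
Proof.
have [d Hd] := expand_ex r; rewrite {2}Hd; congr expand; apply/ffunP => i.
by apply: val_inj; rewrite ffunE /= (digit_expand Hd).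
Qed.

Lemma dig_expand d : dig (expand d) = d.
Proof. by apply: expand_inj; rewrite digK. Qed.

Lemma cardR : #|R| = (q ^ s)%N.
Proof.
have bij : bijective expand by exists dig => [d|r]; rewrite ?dig_expand ?digK.
by rewrite -(bij_eq_card bij) card_ffun !card_ord.
Qed.


Local Notation lt := (@chain_lt R F gamma s e).

Lemma digit_inj x y : (forall i, dg x i = dg y i) -> x = y.
Proof.
move=> H; rewrite -(digK x) -(digK y); congr expand; apply/ffunP => i.
by apply: val_inj; rewrite !ffunE /= H.
Qed.

Lemma lt_irr x : ~~ lt x x.
Proof. by apply/existsP => [[i /andP [H _]]]; rewrite ltnn in H. Qed.

Lemma lt_trans y x z : lt y x -> lt x z -> lt y z.
Proof.
move=> /existsP [i /andP [Hi /forallP Ai]] /existsP [i' /andP [Hi' /forallP Ai']].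
apply/existsP; case: (ltngtP i i') => H.
- exists i'; apply/andP; split.
    by have := implyP (Ai i') H => /eqP ->.
  apply/forallP => j; apply/implyP => Hj.
  have := implyP (Ai j) (ltn_trans H Hj) => /eqP ->.
  exact: implyP (Ai' j) Hj.
- exists i; apply/andP; split.
    by have := implyP (Ai' i) H => /eqP <-.
  apply/forallP => j; apply/implyP => Hj.
  have := implyP (Ai j) Hj => /eqP ->.
  exact: implyP (Ai' j) (ltn_trans H Hj).
- exists i; apply/andP; split.
    have -> : i = i' by apply: val_inj.
    by apply: ltn_trans Hi'; have -> : i' = i by apply: val_inj.
  apply/forallP => j; apply/implyP => Hj.
  have := implyP (Ai j) Hj => /eqP ->.
  by apply: implyP (Ai' j) _; rewrite -H.
Qed.

Lemma lt_total x y : x != y -> lt x y || lt y x.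
Proof.
move=> nxy.
have [i0 Hi0] : exists i, dg x i != dg y i.
  apply/existsP; apply: contraR nxy => /existsPn H; apply/eqP.
  by apply: digit_inj => i; apply/eqP; have := H i; rewrite negbK.
case: (@arg_maxnP 'I_s i0 (fun i => dg x i != dg y i) val Hi0) => i Hi Hmax.
have Habove : forall j : 'I_s, (i < j)%N -> dg x j == dg y j.
  move=> j Hj; apply: contraTT Hj => Hne; rewrite -leqNgt; exact: Hmax.
case: (ltngtP (dg x i) (dg y i)) => Hc.
- apply/orP; left; apply/existsP; exists i; rewrite Hc /=.
  by apply/forallP => j; apply/implyP => Hj; apply: Habove.
- apply/orP; right; apply/existsP; exists i; rewrite Hc /=.
  by apply/forallP => j; apply/implyP => Hj; rewrite eq_sym; apply: Habove.
- by rewrite Hc eqxx in Hi.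
Qed.

Definition rank r := #|[set y | lt y r]|.

Lemma rank_lt r : (rank r < #|R|)%N.
Proof.
rewrite /rank -cardsT; apply: proper_card; rewrite properT.
apply/eqP => H; have : r \in [set y | lt y r] by rewrite H inE.
by rewrite inE (negbTE (lt_irr r)).
Qed.

Lemma rank_inj : injective rank.
Proof.
move=> x y Hxy; apply/eqP; apply/negP => /negP nxy.
wlog H : x y Hxy nxy / lt x y.
  move=> W; case/orP: (lt_total nxy) => H; first exact: W H.
  by apply: (W y x) => //; rewrite eq_sym.
have : [set z | lt z x] \proper [set z | lt z y].
  apply/properP; split.
    by apply/subsetP => z; rewrite !inE => Hz; apply: lt_trans Hz H.
  by exists x; rewrite !inE ?H ?(negbTE (lt_irr x)).
by move/proper_card; rewrite -/(rank x) -/(rank y) Hxy ltnn.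
Qed.

Lemma rank_onto j : (j < #|R|)%N -> exists r, rank r = j.
Proof.
move=> Hj.
have inj : injective (fun r => Ordinal (rank_lt r)).
  by move=> x y /(congr1 val) /= /rank_inj.
have := inj_card_onto inj (f := fun r => Ordinal (rank_lt r)).
rewrite card_ord leqnn => /(_ isT (Ordinal Hj)) /codomP [r /(congr1 val) /= Hr].
by exists r.
Qed.

Lemma rho_rank j : (j < #|R|)%N -> rank (@rho R F gamma s e j) = j.
Proof.
move=> Hj; rewrite /rho; case: pickP => [r /eqP // | H].
by have [r Hr] := rank_onto Hj; have := H r; rewrite -/(rank r) Hr eqxx.
Qed.

Lemma rho_inj j j' : (j < #|R|)%N -> (j' < #|R|)%N ->
  @rho R F gamma s e j = @rho R F gamma s e j' -> j = j'.
Proof. by move=> Hj Hj' H; rewrite -(rho_rank Hj) -(rho_rank Hj') H. Qed.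

Local Notation Q := (q ^ s)%N.

Lemma Q_gt0 : (0 < Q)%N. Proof. by rewrite expn_gt0 q_gt0. Qed.

Lemma Gent_inj k : forall c c', (c < Q ^ k)%N -> (c' < Q ^ k)%N ->
  (forall i, (i < k)%N -> @Gent R F gamma s e k i c = @Gent R F gamma s e k i c') -> c = c'.
Proof.
elim: k => [|k IH] c c' Hc Hc' H.
  by move: Hc Hc'; rewrite expn0 !ltnS !leqn0 => /eqP -> /eqP ->.
have Hpos : (0 < Q ^ k)%N by rewrite expn_gt0 Q_gt0.
have Hd : forall c, (c < Q ^ k.+1)%N -> (c %/ Q ^ k < #|R|)%N.
  by move=> c0 Hc0; rewrite cardR ltn_divLR // -expnS.
have H0 := H 0%N isT; rewrite /= in H0.
have Ediv := rho_inj (Hd _ Hc) (Hd _ Hc') H0.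
have Emod : (c %% Q ^ k = c' %% Q ^ k)%N.
  apply: IH; rewrite ?ltn_pmod // => i Hi.
  exact: (H i.+1 Hi).
by rewrite (div.divn_eq c (Q ^ k)) (div.divn_eq c' (Q ^ k)) Ediv Emod.
Qed.

Definition Xcol k (c : 'I_(Q ^ k)) : 'cV[R]_k := col c (@Gmx R F gamma s e k).

Lemma Xcol_bij k : bijective (@Xcol k).
Proof.
apply: inj_card_bij; last by rewrite card_mx card_ord cardR muln1.
move=> c c' E; apply: val_inj; apply: (@Gent_inj k); [exact: ltn_ord|exact: ltn_ord|move=> i Hi].
by have := congr1 (fun m : 'cV[R]_k => m (Ordinal Hi) 0) E; rewrite /Xcol !mxE.
Qed.


Local Notation gr r := (@gray R F gamma s e pi M r).

Lemma gray_entry r v : gr r 0 v = \sum_(i < s) pi (e (dg r i)) * M i v.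
Proof. by rewrite /gray !mxE; apply: eq_bigr => i _; rewrite mxE. Qed.

Lemma Hlst : (s.-1 < s)%N. Proof. by rewrite ltn_predL. Qed.
Definition lst : 'I_s := Ordinal Hlst.

Lemma neq_lst (i : 'I_s) : i != lst -> (i < s.-1)%N.
Proof.
move=> H; have : (i <= s.-1)%N by rewrite -ltnS prednK.
rewrite leq_eqVlt => /orP [/eqP E|//].
by move: H; rewrite (_ : i = lst) ?eqxx //; apply: val_inj.
Qed.

Lemma lt_lst (i : 'I_s) : (i < s.-1)%N -> (i == lst) = false.
Proof. by move=> Hi; apply/negbTE; apply/eqP => E; rewrite E /= ltnn in Hi. Qed.

Lemma gamma_last : gamma * gamma ^+ s.-1 = 0.
Proof. by rewrite -exprS prednK. Qed.

Lemma LO c : exists m : 'I_q, c * gamma ^+ s.-1 = e m * gamma ^+ s.-1.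
Proof.
have [m Hm] := Esurj (pi c); exists m.
have : pi (c - e m) = 0 by rewrite rmorphB Hm subrr.
move/pi0_gamma => [z Hz].
have -> : c = e m + gamma * z by rewrite -Hz; ring.
by rewrite mulrDl (mulrC gamma z) -mulrA gamma_last mulr0 addr0.
Qed.

Lemma shift_digits r (j : 'I_q) :
  (forall i : 'I_s, (i < s.-1)%N -> dg (r + e j * gamma ^+ s.-1) i = dg r i) /\
  pi (e (dg (r + e j * gamma ^+ s.-1) lst)) = pi (e (dg r lst)) + pi (e j).
Proof.
set d := dig r.
have [m Hm] := Esurj (pi (e (d lst)) + pi (e j)).
have : pi (e (d lst) + e j - e m) = 0 by rewrite rmorphB rmorphD Hm subrr.
move/pi0_gamma => [z Hz].
set d' := [ffun i => if i == lst then m else d i].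
have Hd'l : d' lst = m by rewrite /d' ffunE eqxx.
have Hd'i : forall i, i != lst -> d' i = d i by move=> i /negbTE Hi; rewrite /d' ffunE Hi.
have Hr' : r + e j * gamma ^+ s.-1 = expand d'.
  rewrite -{1}(digK r) /expand (bigD1 lst) //= [in RHS](bigD1 lst) //= Hd'l.
  have -> : \sum_(i < s | i != lst) e (d' i) * gamma ^+ i
          = \sum_(i < s | i != lst) e (d i) * gamma ^+ i.
    by apply: eq_bigr => i Hi; rewrite Hd'i.
  have -> : e m = e (d lst) + e j - gamma * z by rewrite -Hz; ring.
  rewrite mulrBl (mulrC gamma z) -mulrA gamma_last mulr0 subr0 /d; ring.
split.
  move=> i Hi; rewrite (digit_expand Hr') Hd'i; last by rewrite lt_lst.
  by rewrite /d /dig ffunE.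
by rewrite (digit_expand Hr') Hd'l Hm /d /dig ffunE.
Qed.

Lemma gray_shift r (j : 'I_q) v :
  gr (r + e j * gamma ^+ s.-1) 0 v = gr r 0 v + pi (e j).
Proof.
have [H1 H2] := shift_digits r j.
rewrite !gray_entry (bigD1 lst) //= [X in _ = X + _](bigD1 lst) //= H2.
rewrite (@HMlast lst v) // !mulr1.
rewrite (eq_bigr (fun i => pi (e (dg r i)) * M i v)); first by rewrite addrAC.
by move=> i Hi; rewrite H1 //; apply: neq_lst.
Qed.

Lemma dg0 i : dg 0 i = 0%N.
Proof.
have H0 : (0 : R) = expand [ffun _ => Ordinal q_gt0].
  by rewrite /expand big1 // => i0 _; rewrite ffunE He0 mul0r.
by rewrite (digit_expand H0) ffunE.
Qed.

Lemma gray0 v : gr 0 0 v = 0.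
Proof. by rewrite gray_entry big1 // => i _; rewrite dg0 He0 rmorph0 mul0r. Qed.

Lemma last_only r : (forall i : 'I_s, (i < s.-1)%N -> dg r i = 0%N) ->
  r = e (dg r lst) * gamma ^+ s.-1.
Proof.
move=> H; rewrite -{1}(digK r) /expand (bigD1 lst) //= big1 ?addr0 ?ffunE //.
by move=> i Hi; rewrite ffunE /= H ?He0 ?mul0r //; apply: neq_lst.
Qed.

Lemma card_sum (T : finType) (P : pred T) : #|[set x | P x]| = (\sum_(x : T) (P x : nat))%N.
Proof. by rewrite -sum1dep_card big_mkcond /=; apply: eq_bigr => x _; case: (P x). Qed.

Lemma fiber (X : finType) (L : X -> F) (tau : F -> X -> X) :
  (forall f, injective (tau f)) -> (forall f x, L (tau f x) = L x + f) ->
  #|X| = (q * #|[set x | L x == 0%R]|)%N.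
Proof.
move=> inj Htau.
have Hf : forall f, #|[set x | L x == f]| = #|[set x | L x == 0]|.
  move=> f; rewrite -(card_preimset [set x | L x == f] (inj f)).
  apply: eq_card => x; rewrite !inE Htau -[X in _ == X]add0r.
  exact: (can_eq (addrK f)).
have -> : #|X| = (\sum_(x : X) \sum_(f : F) (L x == f : nat))%N.
  rewrite -sum1_card; apply: eq_bigr => x _.
  rewrite (bigD1 (L x)) //= eqxx big1 // => f Hf'.
  by rewrite eq_sym (negbTE Hf').
rewrite exchange_big /=.
transitivity (\sum_(f : F) #|[set x | L x == 0%R]|)%N.
  by apply: eq_bigr => f _; rewrite -(Hf f) card_sum.
by rewrite sum_nat_const cardT -cardE mulnC.
Qed.


Lemma fiber_nz (X : finType) (L : X -> F) (tau : F -> X -> X) :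
  (forall f, injective (tau f)) -> (forall f x, L (tau f x) = L x + f) ->
  (q * #|[set x | L x != 0%R]| = #|X| * (q - 1))%N.
Proof.
move=> inj Htau; have HP := fiber inj Htau.
have Hs' : (#|[set x | L x == 0%R]| + #|[set x | L x != 0%R]| = #|X|)%N.
  rewrite -(cardsC [set x | L x == 0]); congr (_ + _)%N.
  by apply: eq_card => x; rewrite !inE.
have -> : #|[set x | L x != 0%R]| = (#|X| - #|[set x | L x == 0%R]|)%N.
  by rewrite -Hs' addKn.
by rewrite mulnBr -HP mulnBr muln1 mulnC.
Qed.

Lemma ncount (dl : 'rV[F]_s) (i0 : 'I_s) : (i0 < s.-1)%N -> dl 0 i0 != 0 ->
  (q * #|[set v | (dl *m M) 0%R v != 0%R]| = q ^ s.-1 * (q - 1))%N.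
Proof.
move=> Hi0 Hnz.
pose K (v : 'I_(q ^ s.-1)) : 'rV[F]_(s.-1) := \row_(i < s.-1) M (widen_ord (leq_pred s) i) v.
have Kinj : injective K.
  move=> v v' E; apply: HMcols => i Hi.
  have := congr1 (fun m : 'rV[F]_(s.-1) => m 0 (Ordinal Hi)) E; rewrite !mxE.
  by rewrite (_ : widen_ord _ _ = i) //; apply: val_inj.
have Kbij : bijective K by apply: inj_card_bij =>//; have := card_mx F 1 s.-1; rewrite /= => ->; rewrite card_ord mul1n.
case: Kbij => Kinv KK KK'.
pose i0' : 'I_(s.-1) := Ordinal Hi0.
pose tau (f : F) (v : 'I_(q ^ s.-1)) := Kinv (K v + (f / dl 0 i0) *: delta_mx 0 i0').
have HM : forall f v i, M i (tau f v) = M i v + (if i == i0 then f / dl 0 i0 else 0).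
  move=> f v i; case: (boolP (i < s.-1)%N) => Hi.
    have := congr1 (fun m : 'rV[F]_(s.-1) => m 0 (Ordinal Hi)) (KK' (K v + (f / dl 0 i0) *: delta_mx 0 i0')).
    have Ew : widen_ord (leq_pred s) (Ordinal Hi) = i by apply: val_inj.
    rewrite !mxE /= Ew => ->; congr (_ + _).
    case: (eqVneq i i0) => [Ei|Ei].
      have -> : (Ordinal Hi == i0') by apply/eqP; apply: val_inj => /=; rewrite Ei.
      by rewrite mulr1.
    have -> : (Ordinal Hi == i0') = false.
      by apply/negbTE; move: Ei; apply: contra => /eqP /(congr1 val) /= Ev; apply/eqP; apply: val_inj.
    by rewrite mulr0.
  have Ei : i = lst by apply/eqP; exact: (contraNT (@neq_lst i) Hi).
  have -> : (i == i0) = false by apply/negbTE; apply: contraNneq Hi => ->.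
  by rewrite !HMlast ?Ei // addr0.
have HL : forall f v, (dl *m M) 0 (tau f v) = (dl *m M) 0 v + f.
  move=> f v; rewrite !mxE.
  rewrite (eq_bigr (fun i => dl 0 i * M i v + dl 0 i * (if i == i0 then f / dl 0 i0 else 0))); last first.
    by move=> i _; rewrite HM mulrDr.
  have E2 : \sum_(i < s) dl 0 i * (if i == i0 then f / dl 0 i0 else 0) = dl 0 i0 * (f / dl 0 i0).
    by rewrite (bigD1 i0) //= eqxx big1 ?addr0 // => i /negbTE ->; rewrite mulr0.
  by rewrite big_split /= E2 mulrC divfK.
have tinj : forall f, injective (tau f).
  by move=> f v v' /(congr1 K); rewrite !KK' => /addIr /Kinj.
by have := fiber_nz tinj HL; rewrite card_ord.
Qed.


Lemma val_exists r : r != 0 -> exists y, r * y = gamma ^+ s.-1.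
Proof.
have aux : forall m t w, (t + m = s)%N -> gamma ^+ t * w != 0 ->
    exists y, gamma ^+ t * w * y = gamma ^+ s.-1.
  elim=> [|m IH] t w Ht Hnz.
    by rewrite addn0 in Ht; rewrite Ht Hs mul0r eqxx in Hnz.
  case: (eqVneq (pi w) 0) => Hw.
    have [z Hz] := pi0_gamma Hw.
    have E : gamma ^+ t * w = gamma ^+ t.+1 * z by rewrite Hz exprSr mulrA.
    rewrite E; apply: IH; last by rewrite -E.
    by rewrite addSnnS.
  have [u Hu] := invP Hw.
  exists (u * gamma ^+ (s.-1 - t)).
  rewrite mulrA -(mulrA _ w u) Hu mulr1 -exprD subnKC //.
  by rewrite -ltnS prednK // -Ht; lia.
move=> Hr; have := aux s 0%N r (add0n s); rewrite expr0 !mul1r; exact.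
Qed.

Lemma Einv_ex : exists g : F -> 'I_q, forall f, pi (e (g f)) = f.
Proof.
have inj : injective (fun j : 'I_q => pi (e j)).
  by move=> i j /HeT H; apply: val_inj; apply: H.
have [g _ gK] := inj_card_bij inj (eq_leq (esym (card_ord q))).
by exists g.
Qed.

Lemma TR k (d : 'rV[R]_k) (v : 'I_(q ^ s.-1)) : d != 0 ->
  (q * #|[set x : 'cV[R]_k | gr ((d *m x) 0%R 0%R) 0%R v != 0%R]| = q ^ (s * k) * (q - 1))%N.
Proof.
move=> Hd.
have [i Hi] : exists i, d 0 i != 0.
  apply/existsP; apply: contraR Hd => /existsPn H; apply/eqP/matrixP => a b.
  by rewrite mxE (ord1 a); apply/eqP; have := H b; rewrite negbK.
have [y Hy] := val_exists Hi.
pose x0 : 'cV[R]_k := y *: delta_mx i 0.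
have Hx0 : (d *m x0) 0 0 = gamma ^+ s.-1.
  rewrite mxE (bigD1 i) //= !mxE eqxx mulr1 big1 ?addr0 //.
  by move=> j /negbTE Hj; rewrite !mxE Hj mulr0 mulr0.
have [g Hg] := Einv_ex.
pose tau (f : F) (x : 'cV[R]_k) := x + e (g f) *: x0.
have HL : forall f x, gr ((d *m tau f x) 0 0) 0 v = gr ((d *m x) 0 0) 0 v + f.
  move=> f x; rewrite /tau mulmxDr -scalemxAr.
  have -> : (d *m x + e (g f) *: (d *m x0)) 0 0 = (d *m x) 0 0 + e (g f) * (d *m x0) 0 0.
    by rewrite !mxE.
  rewrite Hx0.
  by rewrite gray_shift Hg.
have tinj : forall f, injective (tau f) by move=> f; apply: addIr.
have := fiber_nz tinj HL.
have -> : #|{: 'cV[R]_k}| = (q ^ (s * k))%N.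
  by have := card_mx R k 1; rewrite /= => ->; rewrite cardR muln1 -expnM.
by [].
Qed.


Definition drow r : 'rV[F]_s := \row_(i < s) pi (e (dg r i)).

Lemma gr_drow r : gr r = drow r *m M. Proof. by []. Qed.

Lemma drow_nz r (i : 'I_s) : dg r i != 0%N -> drow r 0 i != 0.
Proof.
move=> H; rewrite mxE; apply: contra H => /eqP H.
apply/eqP; apply: (@HeT _ 0%N) => //; first exact: digit_lt; first exact: q_gt0.
by rewrite H He0 rmorph0.
Qed.

Lemma diff u w :
  #|[set v | gr u 0 v != gr w 0 v]| = #|[set v | gr (u - w) 0 v != 0]|.
Proof.
case: (boolP [forall i : 'I_s, (i < s.-1)%N ==> (dg (u - w) i == 0%N)]) => Hpre.
  have H0 : forall i : 'I_s, (i < s.-1)%N -> dg (u - w) i = 0%N.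
    by move=> i Hi; apply/eqP; exact: (implyP (forallP Hpre i) Hi).
  have Euw := last_only H0.
  set m := Ordinal (digit_lt (u - w) lst).
  have Euw' : u - w = e m * gamma ^+ s.-1 by [].
  have Eu : u = w + e m * gamma ^+ s.-1 by rewrite -Euw'; ring.
  apply: eq_card => v; rewrite !inE Euw' -[e m * _]add0r gray_shift gray0 add0r.
  rewrite Eu gray_shift -subr_eq0 addrAC subrr add0r.
  by rewrite -[in RHS](subr_eq0 (pi (e m))) subr0.
have [i1 [Hi1 Hne1]] : exists i1 : 'I_s, (i1 < s.-1)%N /\ dg (u - w) i1 != 0%N.
  move/forallPn: Hpre => [i1]; rewrite negb_imply => /andP [H1 H2]; by exists i1.
have [i0 [Hi0 Hne0]] : exists i0 : 'I_s, (i0 < s.-1)%N /\ dg u i0 != dg w i0.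
  case: (boolP [exists i0 : 'I_s, (i0 < s.-1)%N && (dg u i0 != dg w i0)]).
    by move=> /existsP [i0 /andP [a b]]; exists i0.
  move=> Hno; exfalso.
  have H : forall i : 'I_s, (i < s.-1)%N -> dg u i = dg w i.
    by move=> i Hi; apply/eqP; move/existsPn: Hno => /(_ i); rewrite Hi /= negbK.
  have Ed : u - w = (e (dg u lst) - e (dg w lst)) * gamma ^+ s.-1.
    rewrite -{1}(digK u) -{1}(digK w) /expand -sumrB (bigD1 lst) //= big1.
      by rewrite addr0 !ffunE /= mulrBl.
    by move=> i Hi; rewrite !ffunE /= H ?subrr //; apply: neq_lst.
  have [m Hm] := LO (e (dg u lst) - e (dg w lst)).
  have [S1 _] := shift_digits 0 m.
  have := S1 i1 Hi1; rewrite add0r -Hm -Ed dg0 => E.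
  by rewrite E eqxx in Hne1.
have Hq := q_gt0.
apply/eqP; rewrite -(eqn_pmul2l Hq); apply/eqP.
have -> : #|[set v | gr (u - w) 0 v != 0]| = #|[set v | (drow (u - w) *m M) 0 v != 0]| by [].
rewrite (ncount Hi1 (drow_nz Hne1)).
have -> : #|[set v | gr u 0 v != gr w 0 v]| = #|[set v | ((drow u - drow w) *m M) 0 v != 0]|.
  have EB : forall (A B : 'rV[F]_(q ^ s.-1)) v, (A - B) 0 v = A 0 v - B 0 v.
    by move=> A B v'; rewrite !mxE.
  by apply: eq_card => v; rewrite !inE mulmxBl EB -!gr_drow subr_eq0.
apply: ncount Hi0 _.
rewrite !mxE subr_eq0; apply: contra Hne0 => /eqP /HeT H.
by apply/eqP; apply: H; apply: digit_lt.
Qed.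


Lemma card_mxvec (m n : nat) (A B : 'M[F]_(m, n)) :
  #|[set j | mxvec A 0 j != mxvec B 0 j]| = (\sum_(t < m) #|[set v | A t v != B t v]|)%N.
Proof.
rewrite card_sum (reindex (uncurry (@mxvec_index m n))) /=; last first.
  exact: onW_bij (onT_bij (curry_mxvec_bij m n)).
transitivity (\sum_(t < m) \sum_(v < n) (A t v != B t v : nat))%N.
  by rewrite pair_big /=; apply: eq_bigr => [[t v]] _ /=; rewrite !mxvecE.
by apply: eq_bigr => t _; rewrite card_sum.
Qed.

Definition gv k (a : 'rV[R]_k) := @gray_vec R F gamma s e pi M _ (a *m @Gmx R F gamma s e k).

Lemma dist k (a b : 'rV[R]_k) : (1 <= k)%N ->
  dH (gv a) (gv b) = if a == b then 0%N else (q ^ (s * k.+1 - 2) * (q - 1))%N.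
Proof.
move=> Hk.
have EB : forall n (A B : 'rV[F]_n) v, (A - B) 0 v = A 0 v - B 0 v.
  by move=> n A B v'; rewrite !mxE.
case: (eqVneq a b) => [->|Hab].
  rewrite /dH /wH; apply/eqP; rewrite cards_eq0; apply/eqP/setP => j.
  by rewrite !inE EB subrr eqxx.
have -> : dH (gv a) (gv b) = #|[set j | gv a 0 j != gv b 0 j]|.
  by apply: eq_card => j; rewrite !inE EB subr_eq0.
rewrite /gv /gray_vec card_mxvec.
pose G := @Gmx R F gamma s e k.
rewrite (eq_bigr (fun t => #|[set v | gr (((a - b) *m G) 0 t) 0 v != 0]|)); last first.
  move=> t _.
  have HM : forall (c : 'rV[R]_((q ^ s) ^ k)) t v,
      (\matrix_(t0 < (q ^ s) ^ k) gr (c 0 t0)) t v = gr (c 0 t) 0 v by move=> c t0 v; rewrite mxE.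
  transitivity #|[set v | gr ((a *m G) 0 t) 0 v != gr ((b *m G) 0 t) 0 v]|.
    by apply: eq_card => v; rewrite !inE !HM.
  rewrite diff; apply: eq_card => v; rewrite !inE mulmxBl.
  have EBR : forall n (A B : 'rV[R]_n) v, (A - B) 0 v = A 0 v - B 0 v.
    by move=> n A B v'; rewrite !mxE.
  by rewrite EBR.
rewrite (eq_bigr (fun t => #|[set v | gr (((a - b) *m Xcol t) 0 0) 0 v != 0]|)); last first.
  move=> t _; apply: eq_card => v; rewrite !inE; congr (gr _ 0 v != 0).
  by rewrite !mxE; apply: eq_bigr => i _; rewrite !mxE.
rewrite -(reindex (@Xcol k) (P := xpredT)
  (F := fun x => #|[set v | gr (((a - b) *m x) 0 0) 0 v != 0]|)) /=; last first.
  exact: onW_bij (Xcol_bij k).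
rewrite (eq_bigr (fun x : 'cV[R]_k => \sum_(v < q ^ s.-1) (gr (((a - b) *m x) 0%R 0%R) 0%R v != 0%R : nat))%N); last first.
  by move=> x _; rewrite card_sum.
rewrite exchange_big /=.
have Hd : a - b != 0 by rewrite subr_eq0.
apply/eqP; rewrite -(eqn_pmul2l q_gt0); apply/eqP.
rewrite big_distrr /=.
rewrite (eq_bigr (fun v => q ^ (s * k) * (q - 1))%N); last first.
  by move=> v _; rewrite -(TR v Hd) card_sum.
rewrite sum_nat_const card_ord.
have Hs2 : (s * k.+1 - 2 = s.-1 + s * k - 1)%N.
  have : (1 <= s * k)%N by rewrite muln_gt0 Hs1.
  rewrite mulnS; move: Hs1; lia.
rewrite Hs2 !mulnA -expnD -expnS; congr (_ ^ _ * _)%N.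
have : (1 <= s * k)%N by rewrite muln_gt0 Hs1.
move: Hs1; lia.
Qed.


Lemma dH_refl n (x : 'rV[F]_n) : dH x x = 0%N.
Proof.
rewrite /dH /wH subrr; apply/eqP; rewrite cards_eq0; apply/eqP/setP => j.
by rewrite !inE mxE eqxx.
Qed.

Lemma gv0 k : gv (0 : 'rV[R]_k) = 0.
Proof.
apply/rowP => j; rewrite /gv /gray_vec mxE; case/mxvec_indexP: j => t v.
have Z : forall t0 : 'I_((q ^ s) ^ k), (0 *m Gmx F gamma s e k) 0 t0 = 0.
  by move=> t0; rewrite mul0mx => t1; rewrite mxE.
by rewrite mxvecE mxE Z gray0.
Qed.

Lemma main k : (1 <= k)%N ->
  let q := #|F| in
  let C := gray_code gamma e pi M k in
  let n' := (q ^ (s * k.+1 - 1))%N in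
  let l := (q ^ (s * k.+1 - 2) * (q - 1))%N in
  [/\ ((q ^ s) ^ k * q ^ s.-1 = n')%N,
      #|C| = (q ^ (s * k))%N,
      (exists2 c1, c1 \in C & exists2 c2, c2 \in C & c1 != c2 /\ dH c1 c2 = l),
      (forall c1 c2, c1 \in C -> c2 \in C -> c1 != c2 -> (l <= dH c1 c2)%N)
    & weight_enum C =
        (q ^ (s * k) - 1)%N%:R * varX ^+ (n' - l) * varY ^+ l + varX ^+ n'].
Proof.
move=> Hk q0 C n' l.
have Hsk : (1 <= s * k)%N by rewrite muln_gt0 Hs1.
have Hn : ((q ^ s) ^ k * q ^ s.-1 = n')%N.
  rewrite /n' -expnM -expnD; congr (_ ^ _)%N; rewrite mulnS; move: Hs1; lia.
have Hl0 : (0 < l)%N by rewrite /l muln_gt0 expn_gt0 q_gt0 subn_gt0 q_gt1.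
have Hln : (l <= n')%N.
  rewrite /l /n' (_ : (s * k.+1 - 1 = (s * k.+1 - 2).+1)%N); last by rewrite mulnS; move: Hs1; lia.
  by rewrite expnSr leq_mul // leq_subr.
have Hdist : forall a b : 'rV[R]_k, dH (gv a) (gv b) = if a == b then 0%N else l.
  by move=> a b; rewrite dist.
have gv_inj : injective (@gv k).
  move=> a b E; apply/eqP; apply: contraT => Hab.
  by have := Hdist a b; rewrite (negbTE Hab) E dH_refl => H; rewrite -H ltnn in Hl0.
have memC : forall c, (c \in C) = (c \in [set gv a | a in [set: 'rV[R]_k]]).
  move=> c; apply/idP/idP.
    case/imsetP => x /imsetP [a _ ->] ->; apply/imsetP; exists a => //.
  case/imsetP => a _ ->; apply/imsetP; exists (a *m Gmx F gamma s e k) => //.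
  by apply/imsetP; exists a.
have EC : C = [set gv a | a in [set: 'rV[R]_k]] by apply/setP => c; rewrite memC.
have cardRk : #|{: 'rV[R]_k}| = (q ^ (s * k))%N.
  by have := card_mx R 1 k; rewrite /= => ->; rewrite cardR mul1n -expnM.
split => //.
- by rewrite EC card_imset // cardsT cardRk.
- pose a1 : 'rV[R]_k := const_mx 1.
  have Ha1 : (0 : 'rV[R]_k) != a1.
    apply/eqP => /matrixP /(_ 0 (Ordinal Hk)); rewrite !mxE => /eqP.
    by rewrite eq_sym oner_eq0.
  exists (gv 0); first by rewrite EC; apply/imsetP; exists 0.
  exists (gv a1); first by rewrite EC; apply/imsetP; exists a1.
  split; last by rewrite Hdist (negbTE Ha1).
  by apply: contra Ha1 => /eqP /gv_inj ->.
- move=> c1 c2; rewrite !EC => /imsetP [a _ ->] /imsetP [b _ ->] Hne.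
  rewrite Hdist; case: eqVneq => // Eab.
  by rewrite Eab eqxx in Hne.
have wHgv : forall a : 'rV[R]_k, wH (gv a) = if a == 0 then 0%N else l.
  by move=> a; rewrite -Hdist gv0 /dH subr0.
have Hcount : forall i, #|[set c in C | wH c == i]| = #|[set a : 'rV[R]_k | (if a == 0 then 0%N else l) == i]|.
  move=> i; rewrite -(card_imset _ gv_inj); apply: eq_card => c; rewrite !inE.
  apply/andP/imsetP.
    move=> [cC Hw]; move: cC; rewrite EC => /imsetP [a _ Ec].
    by exists a; rewrite ?inE -?wHgv -?Ec.
  move=> [a Ha ->]; rewrite EC; split; first by apply/imsetP; exists a.
  by rewrite wHgv; rewrite inE in Ha.
rewrite /weight_enum.
have Hl' : (l < ((q ^ s) ^ k * q ^ s.-1).+1)%N by rewrite Hn ltnS.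
rewrite (bigD1 (Ordinal Hl')) //= (bigD1 ord0) //=; last by rewrite -val_eqE /= eq_sym -lt0n.
rewrite big1; last first.
  move=> i /andP [Hi1 Hi2]; rewrite Hcount.
  have -> : #|[set a : 'rV[R]_k | (if a == 0 then 0%N else l) == i]| = 0%N.
    apply/eqP; rewrite cards_eq0; apply/eqP/setP => a; rewrite !inE.
    case: (a == 0).
      by apply/negbTE; rewrite eq_sym; move: Hi2; rewrite -val_eqE.
    by apply/negbTE; rewrite eq_sym; move: Hi1; rewrite -val_eqE.
  by rewrite !mul0r.
rewrite !Hcount /=.
have -> : #|[set a : 'rV[R]_k | (if a == 0 then 0%N else l) == 0%N]| = 1%N.
  apply: (etrans _ (cards1 (0 : 'rV[R]_k))); apply: eq_card => a; rewrite !inE.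
  by case: (a == 0); rewrite // eqn0Ngt Hl0.
have -> : #|[set a : 'rV[R]_k | (if a == 0 then 0%N else l) == l]| = (q ^ (s * k) - 1)%N.
  rewrite -cardRk subn1; apply: (etrans _ (cardsC1 (0 : 'rV[R]_k))); apply: eq_card => a; rewrite !inE.
  by case: (a == 0); rewrite /= ?eqxx // eq_sym eqn0Ngt Hl0.
by rewrite Hn subn0 expr0 !mulr1 addr0 mul1r.
Qed.

End Proofs.

Unset Implicit Arguments. Set Strict Implicit.

Theorem theorem3p16
  (R : finComNzRingType) (F : finFieldType) (pi : {rmorphism R -> F})
  (gamma : R) (s : nat) (e : nat -> R) (M : 'M[F]_(s, #|F| ^ s.-1)) (k : nat)
  (* R is a chain ring whose unique maximal ideal is generated by gamma *)
  (Hchain : is_chain_ring R)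
  (Hmax : forall J : {set R}, is_maximal_ideal J <-> J = principal_ideal gamma)
  (* s is the least integer >= 1 with gamma^s = 0 *)
  (Hs1 : (1 <= s)%N) (Hs : gamma ^+ s = 0)
  (Hsmin : forall t, (1 <= t < s)%N -> gamma ^+ t != 0)
  (* pi : R -> R/<gamma> ~= F_q, r |-> \bar r *)
  (Hpi_surj : forall x : F, exists r : R, pi r = x)
  (Hpi_ker : forall r : R, pi r = 0 <-> r \in principal_ideal gamma)
  (* T = {e_0, ..., e_{q-1}} is a set of coset representatives, e_0 = 0, e_1 = 1 *)
  (He0 : e 0%N = 0) (He1 : e 1%N = 1)
  (HeT : forall i j, (i < #|F|)%N -> (j < #|F|)%N -> pi (e i) = pi (e j) -> i = j)
  (* the columns of M are exactly the vectors (v, 1)^T, v in F_q^(s-1) *)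
  (HMlast : forall (i : 'I_s) j, val i = s.-1 -> M i j = 1)
  (HMcols : forall j j', (forall i : 'I_s, (val i < s.-1)%N -> M i j = M i j') -> j = j')
  (Hk : (1 <= k)%N) :
  let q := #|F| in
  let C := gray_code gamma e pi M k in
  let n' := (q ^ (s * k.+1 - 1))%N in
  let l := (q ^ (s * k.+1 - 2) * (q - 1))%N in
  [/\ ((q ^ s) ^ k * q ^ s.-1 = n')%N,
      #|C| = (q ^ (s * k))%N,
      (exists2 c1, c1 \in C & exists2 c2, c2 \in C & c1 != c2 /\ dH c1 c2 = l),
      (forall c1 c2, c1 \in C -> c2 \in C -> c1 != c2 -> (l <= dH c1 c2)%N)
    & weight_enum C =
        (q ^ (s * k) - 1)%N%:R * varX ^+ (n' - l) * varY ^+ l + varX ^+ n'].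
Proof.
exact: (@main R F pi gamma s e M Hs1 Hs Hsmin Hpi_surj Hpi_ker He0 HeT HMlast HMcols k Hk).
Qed.
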